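(* Let $\bm A\in\mathbb R^{m\times n}$, $\bm D\in\mathbb R^{n\times d}$ with $\bm D\bm D^\top=\bm I_n$, $0<\alpha\le1$, and let $s\ge2$ be an integer. Let $\bm h,\bm x\in\mathbb R^n$, let $S$ be an index set of $s$ largest-magnitude entries of $\bm D^\top\bm h$ and $T$ an index set of $s$ largest-magnitude entries of $\bm D^\top\bm x$, and assume $$\|\bm D_{S^c}^\top\bm h\|_1-\alpha\|\bm D_{S^c}^\top\bm h\|_2\le a\|\bm D_S^\top\bm h\|_1+b\|\bm D_S^\top\bm h\|_2+c\|\bm D_{T^c}^\top\bm x\|_1+\eta\|\bm A\bm h\|_2+\gamma$$ for constants $a>0$, $b,c,\eta,\gamma\ge0$ with $(a-1)\sqrt s+(b+1)\ge0$. Then for every $\bar\varepsilon>0$, $$\|\bm D_{S^c}^\top\bm h\|_2\le\Bigg(\sqrt{\frac{a\sqrt s+b}{\sqrt s}+\frac{\alpha^2}{4s}}+\frac{\alpha+\bar\varepsilon}{2\sqrt s}\Bigg)\|\bm D_S^\top\bm h\|_2+\frac1{2\bar\varepsilon}\big(c\|\bm D_{T^c}^\top\bm x\|_1+\eta\|\bm A\bm h\|_2+\gamma\big).$$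
   Context: For an index set $S\subseteq\{1,\dots,d\}$, $S^c$ is its complement and $\bm D_S$ denotes $\bm D$ with all columns not indexed by $S$ set to zero (so $\bm D_S^\top\bm h$ is $\bm D^\top\bm h$ with entries outside $S$ set to zero). *)

(* Defs.v *)
From mathcomp Require Import all_boot all_order all_algebra.
From mathcomp Require Import reals.
Set Implicit Arguments. Unset Strict Implicit. Unset Printing Implicit Defensive.
Import Order.TTheory GRing.Theory Num.Theory.
Local Open Scope ring_scope.

Definition norm1 (R : realType) (k : nat) (v : 'cV[R]_k) : R :=
  \sum_(i < k) `|v i 0|.
Definition norm2 (R : realType) (k : nat) (v : 'cV[R]_k) : R :=
  Num.sqrt (\sum_(i < k) (v i 0) ^+ 2).

Definition restr (R : realType) (k : nat) (S : {set 'I_k}) (v : 'cV[R]_k)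
  : 'cV[R]_k := \col_i (if i \in S then v i 0 else 0).

Definition largest_set (R : realType) (k : nat) (s : nat) (v : 'cV[R]_k)
  (S : {set 'I_k}) : Prop :=
  #|S| = s /\ (forall i j, i \in S -> j \notin S -> `|v j 0| <= `|v i 0|).

(* Main.v *)
Require Import Defs.
From mathcomp Require Import all_boot all_order all_algebra.
From mathcomp Require Import reals.
From mathcomp Require Import ring lra.
Import Order.TTheory GRing.Theory Num.Theory.
Local Open Scope ring_scope.

Section H.
Variable R : realType.
Implicit Types (k : nat).

Lemma norm1_restr k (S : {set 'I_k}) (v : 'cV[R]_k) :
  norm1 (restr S v) = \sum_(i in S) `|v i 0|.
Proof.
rewrite /norm1 [RHS]big_mkcond /=; apply: eq_bigr => i _; rewrite mxE.
by case: (i \in S) => //; rewrite normr0.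
Qed.

Lemma norm2_restr k (S : {set 'I_k}) (v : 'cV[R]_k) :
  norm2 (restr S v) ^+ 2 = \sum_(i in S) v i 0 ^+ 2.
Proof.
rewrite /norm2 sqr_sqrtr; last by apply: sumr_ge0 => i _; exact: sqr_ge0.
rewrite [RHS]big_mkcond /=; apply: eq_bigr => i _; rewrite mxE.
by case: (i \in S) => //; rewrite expr0n.
Qed.

Lemma norm2_ge0 k (v : 'cV[R]_k) : 0 <= norm2 v.
Proof. exact: sqrtr_ge0. Qed.

Lemma norm1_ge0 k (v : 'cV[R]_k) : 0 <= norm1 v.
Proof. by apply: sumr_ge0 => i _. Qed.

Lemma cs k (S : {set 'I_k}) (f : 'I_k -> R) :
  (\sum_(i in S) `|f i|) ^+ 2 <= #|S|%:R * \sum_(i in S) f i ^+ 2.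
Proof.
set Q := \sum_(i in S) `|f i|; set s := #|S|%:R.
have H0 : 0 <= \sum_(i in S) (`|f i| * s - Q) ^+ 2.
  by apply: sumr_ge0 => i _; exact: sqr_ge0.
have E : \sum_(i in S) (`|f i| * s - Q) ^+ 2 =
   s ^+ 2 * \sum_(i in S) f i ^+ 2 - s * Q ^+ 2.
  transitivity (\sum_(i in S) (s ^+ 2 * f i ^+ 2 - (2 * s * Q) * `|f i| + Q ^+ 2)).
    apply: eq_bigr => i _; rewrite -[f i ^+ 2]real_normK ?num_real //; ring.
  rewrite !big_split /= sumrN sumr_const -!mulr_sumr -/Q -/s.
  rewrite -mulr_natl -/s; ring.
have hs : 0 <= s by rewrite /s ler0n.
case: (posnP #|S|) => [S0|Spos].
  by rewrite /Q /s (cards0_eq S0) !big_set0 expr0n /= mulr0.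
have sp : 0 < s by rewrite /s ltr0n.
rewrite E in H0.
rewrite -(ler_pM2l sp). nra.
Qed.

Lemma tail k s (S : {set 'I_k}) (v : 'cV[R]_k) : largest_set s v S ->
  s%:R * \sum_(i in ~: S) v i 0 ^+ 2 <=
  (\sum_(i in ~: S) `|v i 0|) * \sum_(i in S) `|v i 0|.
Proof.
case=> cS hS; rewrite mulr_sumr mulr_suml; apply: ler_sum => i; rewrite inE => iS.
have h1 : s%:R * `|v i 0| <= \sum_(j in S) `|v j 0|.
  rewrite -cS mulr_natl -sumr_const; apply: ler_sum => j jS; exact: hS.
rewrite -real_normK ?num_real // expr2 mulrA.
by rewrite [X in _ <= X]mulrC; apply: ler_wpM2r.
Qed.

Lemma arith (r alpha a b epsb X Y P Q K : R) :
  0 < r -> 0 < alpha -> 0 < a -> 0 <= b -> 0 < epsb ->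
  0 <= X -> 0 <= Y -> 0 <= P -> 0 <= Q -> 0 <= K ->
  P - alpha * X <= a * Q + b * Y + K ->
  r ^+ 2 * X ^+ 2 <= P * Q -> Q <= r * Y ->
  X <= (Num.sqrt ((a * r + b) / r + alpha ^+ 2 / (4 * r ^+ 2))
        + (alpha + epsb) / (2 * r)) * Y + (2 * epsb)^-1 * K.
Proof.
move=> r0 al0 a0 b0 e0 X0 Y0 P0 Q0 K0 hP hT hQ.
set t := r^-1. have rt : r * t = 1 by rewrite /t mulfV // gt_eqF.
have t0 : 0 < t by rewrite /t invr_gt0.
set u := epsb^-1. have eu : epsb * u = 1 by rewrite /u mulfV // gt_eqF.
have u0 : 0 < u by rewrite /u invr_gt0.
have e1 : (a * r + b) / r + alpha ^+ 2 / (4 * r ^+ 2) = (a * r + b) * t + alpha ^+ 2 * t ^+ 2 / 4.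
  rewrite /t; field; rewrite gt_eqF //.
have e2 : (alpha + epsb) / (2 * r) = (alpha + epsb) * t / 2.
  rewrite /t; field; rewrite gt_eqF //.
have e3 : (2 * epsb)^-1 * K = K * u / 2.
  rewrite /u; field; rewrite gt_eqF //.
rewrite e1 e2 e3.
have pge : 0 <= (a * r + b) * t + alpha ^+ 2 * t ^+ 2 / 4.
  have h1 : 0 <= a * r by apply: mulr_ge0; lra.
  have h2 : 0 <= (a * r + b) * t by apply: mulr_ge0; lra.
  have h3 : 0 <= alpha ^+ 2 * t ^+ 2 by apply: mulr_ge0; exact: sqr_ge0.
  lra.
set p := Num.sqrt _.
have hp : p ^+ 2 = (a * r + b) * t + alpha ^+ 2 * t ^+ 2 / 4 by rewrite sqr_sqrtr.
have p0 : 0 <= p by exact: sqrtr_ge0.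
have h1 : P * Q <= (alpha * X + a * Q + b * Y + K) * Q by apply: ler_wpM2r => //; lra.
have h2 : (alpha * X + a * Q + b * Y + K) * Q <= (alpha * X + a * (r * Y) + b * Y + K) * (r * Y).
  have hh : 0 <= alpha * X + a * Q + b * Y + K by lra.
  have hQ' : a * Q <= a * (r * Y) by apply: ler_wpM2l => //; lra.
  apply: le_trans (_ : (alpha * X + a * Q + b * Y + K) * (r * Y) <= _).
    by apply: ler_wpM2l.
  apply: ler_wpM2r; [apply: mulr_ge0 => //; lra | lra].
have s1 : X ^+ 2 <= (alpha * X + a * (r * Y) + b * Y + K) * Y * t.
  have : r ^+ 2 * X ^+ 2 <= r ^+ 2 * ((alpha * X + a * (r * Y) + b * Y + K) * Y * t).
    have -> : r ^+ 2 * ((alpha * X + a * (r * Y) + b * Y + K) * Y * t)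
       = (alpha * X + a * (r * Y) + b * Y + K) * (r * Y) * (r * t) by ring.
    rewrite rt mulr1; lra.
  by rewrite ler_pM2l // exprn_gt0.
set W := X - alpha * t * Y / 2.
set Z := p * Y + epsb * t * Y / 2 + K * u / 2.
have s2 : W ^+ 2 <= p ^+ 2 * Y ^+ 2 + K * Y * t.
  have -> : W ^+ 2 = X ^+ 2 - alpha * X * Y * t + alpha ^+ 2 * t ^+ 2 * Y ^+ 2 / 4 by rewrite /W; field.
  rewrite hp.
  have e : (alpha * X + a * (r * Y) + b * Y + K) * Y * t
      = alpha * X * Y * t + a * Y ^+ 2 * (r * t) + b * Y ^+ 2 * t + K * Y * t by ring.
  move: s1; rewrite e rt => s1.
  have -> : ((a * r + b) * t + alpha ^+ 2 * t ^+ 2 / 4) * Y ^+ 2 =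
     a * Y ^+ 2 * (r * t) + b * Y ^+ 2 * t + alpha ^+ 2 * t ^+ 2 * Y ^+ 2 / 4 by ring.
  rewrite rt; lra.
have s3 : p ^+ 2 * Y ^+ 2 + K * Y * t <= Z ^+ 2.
  have -> : Z ^+ 2 = p ^+ 2 * Y ^+ 2 + 2 * p * Y * (epsb * t * Y / 2 + K * u / 2)
     + (epsb * t * Y / 2 - K * u / 2) ^+ 2 + K * Y * t * (epsb * u) by rewrite /Z; field.
  rewrite eu mulr1.
  have : 0 <= 2 * p * Y * (epsb * t * Y / 2 + K * u / 2).
    apply: mulr_ge0; [apply: mulr_ge0 => //; lra|].
    apply: addr_ge0; apply: mulr_ge0; try lra; apply: mulr_ge0; try lra; apply: mulr_ge0; lra.
  have := sqr_ge0 (epsb * t * Y / 2 - K * u / 2). lra.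
have Z0 : 0 <= Z.
  rewrite /Z; apply: addr_ge0; [apply: addr_ge0|].
  - exact: mulr_ge0.
  - apply: mulr_ge0; try lra; apply: mulr_ge0 => //; apply: mulr_ge0; lra.
  - apply: mulr_ge0; try lra; apply: mulr_ge0; lra.
have s4 : W <= Z.
  case: (lerP W 0) => hW; first lra.
  have hWZ : W ^+ 2 <= Z ^+ 2 by lra.
  by rewrite -(ler_pXn2r (n:=2)) // ?nnegrE; lra.
rewrite /W /Z in s4. lra.
Qed.
End H.

Theorem proposition3 (R : realType) (m n d s : nat)
  (A : 'M[R]_(m, n)) (D : 'M[R]_(n, d)) (alpha a b c eta gamma : R)
  (h x : 'cV[R]_n) (S T : {set 'I_d}) :
  D *m D^T = 1%:M ->
  0 < alpha -> alpha <= 1 ->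
  (2 <= s)%N ->
  largest_set s (D^T *m h) S ->
  largest_set s (D^T *m x) T ->
  0 < a -> 0 <= b -> 0 <= c -> 0 <= eta -> 0 <= gamma ->
  0 <= (a - 1) * Num.sqrt (s%:R) + (b + 1) ->
  norm1 (restr (~: S) (D^T *m h)) - alpha * norm2 (restr (~: S) (D^T *m h))
    <= a * norm1 (restr S (D^T *m h)) + b * norm2 (restr S (D^T *m h))
       + c * norm1 (restr (~: T) (D^T *m x)) + eta * norm2 (A *m h) + gamma ->
  forall epsb : R, 0 < epsb ->
  norm2 (restr (~: S) (D^T *m h))
    <= (Num.sqrt ((a * Num.sqrt (s%:R) + b) / Num.sqrt (s%:R)
                  + alpha ^+ 2 / (4 * s%:R))
        + (alpha + epsb) / (2 * Num.sqrt (s%:R))) * norm2 (restr S (D^T *m h))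
       + (2 * epsb)^-1 * (c * norm1 (restr (~: T) (D^T *m x))
                          + eta * norm2 (A *m h) + gamma).
Proof.
move=> _ al0 _ s2 hS _ a0 b0 c0 eta0 g0 _ hyp epsb e0.
set v := D^T *m h.
set X := norm2 (restr (~: S) v); set Y := norm2 (restr S v).
set P := norm1 (restr (~: S) v); set Q := norm1 (restr S v).
set r := Num.sqrt (s%:R : R).
have s0 : (0 : R) <= s%:R by rewrite ler0n.
have rr : r ^+ 2 = s%:R by rewrite sqr_sqrtr.
have r0 : 0 < r by rewrite sqrtr_gt0 ltr0n; apply: leq_trans s2.
rewrite -rr.
have K0 : 0 <= c * norm1 (restr (~: T) (D^T *m x)) + eta * norm2 (A *m h) + gamma.
  apply: addr_ge0 => //; apply: addr_ge0; apply: mulr_ge0 => //;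
    [exact: norm1_ge0 | exact: norm2_ge0].
have X0 : 0 <= X by exact: norm2_ge0.
have Y0 : 0 <= Y by exact: norm2_ge0.
have P0 : 0 <= P by exact: norm1_ge0.
have Q0 : 0 <= Q by exact: norm1_ge0.
have hT : r ^+ 2 * X ^+ 2 <= P * Q.
  rewrite rr /X /P /Q norm2_restr !norm1_restr; case: hS => cS hS'.
  by apply: tail; split.
have hQ : Q <= r * Y.
  have hc := @cs R d S (fun i => v i 0).
  rewrite -norm1_restr -norm2_restr -/Q -/Y (proj1 hS) -rr -exprMn in hc.
  rewrite -(ler_pXn2r (n:=2)) // ?nnegrE //; apply: mulr_ge0; lra.
apply: (@arith R r alpha a b epsb X Y P Q) => //; move: hyp; rewrite -/v -/X -/Y -/P -/Q; lra.
Qed.
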